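(* Let a target $T$ be fixed at a point $(x_T,y_T)\in\mathbb{R}^2$, and consider a UAV with dynamics $\dot x=V\cos\psi$, $\dot y=V\sin\psi$, $\dot\psi=\omega$, $V>0$ constant. Let $r(t)$ be the distance from the UAV to $T$ and $\theta(t)\in[0,2\pi)$ the bearing angle. Let the control input be $$\omega=\begin{cases} k\left[V\cos\!\left(\pi-\sin^{-1}\!\left(\frac{r_a}{r(t)}\right)\right)-\dot r(t)\right], & r(t)\ge r_a,\\ 0,&\text{otherwise},\end{cases}$$ with constants $k>0$ and $r_a\ge 0$. Then for any initial bearing $\theta(0)$ there exists $t^\star\ge 0$ such that $\theta(t)\in[0,\pi]$ for all $t\ge t^\star$.
   Context: The bearing angle $\theta(t)\in[0,2\pi)$ is the angle measured counterclockwise from the vector pointing from the UAV's current position to $T$ to the UAV's current heading $(\cos\psi,\sin\psi)$. In these variables the dynamics read $\dot r=-V\cos\theta$, $\dot\theta=\omega+\frac{V\sin\theta}{r}$. $\sin^{-1}$ is the principal arcsine. *)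

(* Defs.v *)
From Stdlib Require Import Reals.
From Coquelicot Require Import Coquelicot.
Open Scope R_scope.

Definition dist_T (xT yT x y : R) : R := sqrt ((xT - x)^2 + (yT - y)^2).

(* Bearing angle: theta in [0,2pi) is the counterclockwise angle from the
   vector u = T - P to the heading h = (cos psi, sin psi), i.e.
   r cos theta = u . h  and  r sin theta = u x h  (r = |u| > 0). *)
Definition is_bearing (xT yT x y psi theta : R) : Prop :=
  0 <= theta < 2 * PI /\
  dist_T xT yT x y * cos theta = (xT - x) * cos psi + (yT - y) * sin psi /\
  dist_T xT yT x y * sin theta = (xT - x) * sin psi - (yT - y) * cos psi.

(* time derivative of r along the dynamics xdot = V cos psi, ydot = V sin psi:
   rdot = ((x - xT) xdot + (y - yT) ydot) / r *)
Definition rdot (V xT yT x y psi : R) : R :=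
  ((x - xT) * (V * cos psi) + (y - yT) * (V * sin psi)) / dist_T xT yT x y.

Definition omega_law (k V ra xT yT x y psi : R) : R :=
  let r := dist_T xT yT x y in
  if Rle_dec ra r
  then k * (V * cos (PI - asin (ra / r)) - rdot V xT yT x y psi)
  else 0.

(* Closed-loop trajectory on [0, +oo), in integral (Caratheodory) form,
   which allows the discontinuous switching of omega at r = ra. *)
Definition closed_loop (V k ra xT yT : R) (x y psi : R -> R) : Prop :=
  forall t, 0 <= t ->
    is_RInt (fun s => V * cos (psi s)) 0 t (x t - x 0) /\
    is_RInt (fun s => V * sin (psi s)) 0 t (y t - y 0) /\
    is_RInt (fun s => omega_law k V ra xT yT (x s) (y s) (psi s)) 0 t
            (psi t - psi 0).

(* Main.v *)
Require Import Defs.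
From Stdlib Require Import Reals Lra Psatz Classical.
From Coquelicot Require Import Coquelicot.
Open Scope R_scope.


Lemma abs_sin_le x : Rabs (sin x) <= Rabs x.
Proof.
  pose proof (SIN_bound x).
  destruct (Rtotal_order x 0) as [Hx|[Hx|Hx]].
  - pose proof (sin_lt_x (-x) ltac:(lra)) as H1. rewrite sin_neg in H1.
    rewrite (Rabs_left x) by lra. apply Rabs_le. split; try lra.
    destruct (Rle_lt_dec x (-1)); try lra.
    assert (sin x < 0) by (apply sin_lt_0_var; pose proof PI2_1; lra). lra.
  - subst. rewrite sin_0. lra.
  - pose proof (sin_lt_x x Hx) as H1.
    rewrite (Rabs_right x) by lra. apply Rabs_le. split; try lra.
    destruct (Rle_lt_dec 1 x); try lra.
    assert (0 < sin x) by (apply sin_gt_0; pose proof PI2_1; lra). lra.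
Qed.

Lemma one_minus_cos x : 0 <= 1 - cos x <= x^2/2.
Proof.
  assert (Ec : cos x = cos (2*(x/2))) by (f_equal; field). rewrite Ec.
  rewrite cos_2a_sin. pose proof (abs_sin_le (x/2)).
  assert (sin (x/2) * sin (x/2) <= (x/2)*(x/2)).
  { rewrite <- (Rabs_right (sin (x/2) * sin (x/2))) by nra.
    rewrite Rabs_mult. apply Rle_trans with (Rabs (x/2) * Rabs (x/2)).
    apply Rmult_le_compat; auto using Rabs_pos.
    rewrite <- Rabs_mult. rewrite Rabs_right by nra. lra. }
  replace (x^2/2) with (2*((x/2)*(x/2))) by field. pose proof (Rle_0_sqr (sin (x/2))). unfold Rsqr in *. split; lra.
Qed.

Lemma abs_cos_diff a b : Rabs (cos a - cos b) <= Rabs (a - b).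
Proof.
  set (m := (a+b)/2). set (h := (a-b)/2).
  assert (Ea : a = m + h) by (unfold m, h; field).
  assert (Eb : b = m - h) by (unfold m, h; field).
  assert (Eab : a - b = 2 * h) by (unfold h; field).
  rewrite Eab, Ea, Eb. rewrite cos_plus, cos_minus.
  replace (cos m * cos h - sin m * sin h - (cos m * cos h + sin m * sin h))
   with (-2 * (sin m * sin h)) by ring.
  rewrite Rabs_mult, Rabs_mult, Rabs_mult. pose proof (abs_sin_le h).
  pose proof (SIN_bound m).
  assert (Rabs (sin m) <= 1) by (apply Rabs_le; lra).
  replace (Rabs (-2)) with 2 by (rewrite Rabs_left by lra; lra).
  replace (Rabs 2) with 2 by (rewrite Rabs_right by lra; lra).
  pose proof (Rabs_pos (sin h)). pose proof (Rabs_pos (sin m)).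
  nra.
Qed.

Lemma abs_sin_diff a b : Rabs (sin a - sin b) <= Rabs (a - b).
Proof.
  rewrite <- (cos_shift a), <- (cos_shift b).
  eapply Rle_trans. apply abs_cos_diff. right. rewrite <- Rabs_Ropp. f_equal. ring.
Qed.

Lemma sin_minus_id d : Rabs d <= 1 -> Rabs (sin d - d) <= d^2.
Proof.
  intro Hd.
  assert (K: forall e, 0 < e <= 1 -> 0 <= e - sin e <= e^2).
  { intros e He.
    destruct (MVT_cor2 (fun z => z - sin z) (fun z => 1 - cos z) 0 e ltac:(lra)) as [c [Hc1 Hc2]].
    { intros c _. apply derivable_pt_lim_minus. apply derivable_pt_lim_id. apply derivable_pt_lim_sin. }
    rewrite sin_0 in Hc1. pose proof (one_minus_cos c). nra. }
  destruct (Rtotal_order d 0) as [H|[H|H]].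
  - rewrite Rabs_left in Hd by lra. specialize (K (-d) ltac:(lra)). rewrite sin_neg in K.
    apply Rabs_le. nra.
  - subst. rewrite sin_0. replace (0-0) with 0 by ring. rewrite Rabs_R0. lra.
  - rewrite Rabs_right in Hd by lra. specialize (K d ltac:(lra)). apply Rabs_le. nra.
Qed.

Lemma dini_le (g : R -> R) (a b K : R) :
  a <= b ->
  (forall s t, a <= s -> s <= t -> t <= b -> Rabs (g t - g s) <= K * (t - s)) ->
  (forall t, a <= t -> t < b -> forall eps, 0 < eps -> exists delta, 0 < delta /\
      forall h, 0 < h -> h < delta -> t + h <= b -> g (t + h) - g t <= eps * h) ->
  g b <= g a.
Proof.
  intros Hab HL HD.
  assert (Main : forall eps, 0 < eps -> g b <= g a + eps * (b - a)).
  { intros eps Heps.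
    set (P := fun s => g s <= g a + eps * (s - a)).
    set (E := fun t => a <= t <= b /\ forall s, a <= s <= t -> P s).
    assert (HEa : E a).
    { split. lra. intros s Hs. replace s with a by lra. unfold P. lra. }
    assert (HbE : bound E). { exists b. intros t [Ht _]. lra. }
    destruct (completeness E HbE (ex_intro _ a HEa)) as [c [Hub Hlub]].
    assert (Hac : a <= c) by (apply Hub; exact HEa).
    assert (Hcb : c <= b). { apply Hlub. intros t [Ht _]. lra. }
    assert (C1 : forall s, a <= s < c -> P s).
    { intros s Hs.
      destruct (classic (exists t, E t /\ s < t)) as [[t [Et Hst]]|Hn].
      - destruct Et as [_ Et]. apply Et. lra.
      - exfalso. assert (c <= s). { apply Hlub. intros t Et.
          destruct (Rle_lt_dec t s); auto. exfalso. apply Hn. exists t. split; auto. }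
        lra. }
    assert (C2 : P c).
    { destruct (Req_dec c a) as [Eca|Nca].
      - rewrite Eca. unfold P. lra.
      - unfold P. destruct (Rle_lt_dec (g c) (g a + eps * (c - a))) as [ok|bad]; auto.
        exfalso. set (eta := g c - g a - eps * (c - a)).
        set (s := Rmax a (c - eta / (2 * (Rabs K + eps + 1)))).
        assert (Hpos : 0 < 2 * (Rabs K + eps + 1)) by (pose proof (Rabs_pos K); lra).
        assert (Hq : 0 < eta / (2 * (Rabs K + eps + 1))) by (apply Rdiv_lt_0_compat; unfold eta; lra).
        assert (Hs1 : a <= s) by apply Rmax_l.
        assert (Hs2 : s < c).
        { unfold s. apply Rmax_lub_lt; lra. }
        assert (Hs3 : c - s <= eta / (2 * (Rabs K + eps + 1))).
        { unfold s. pose proof (Rmax_r a (c - eta / (2 * (Rabs K + eps + 1)))). lra. }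
        assert (Ps := C1 s (conj Hs1 Hs2)). unfold P in Ps.
        assert (HLs := HL s c Hs1 (Rlt_le _ _ Hs2) Hcb).
        assert (g c - g s <= Rabs K * (c - s)).
        { eapply Rle_trans. apply Rle_abs. eapply Rle_trans. apply HLs.
          apply Rmult_le_compat_r. lra. apply Rle_abs. }
        assert ((Rabs K + eps + 1) * (c - s) <= eta / 2).
        { apply Rmult_le_reg_l with 2. lra.
          replace (2 * (eta/2)) with eta by field.
          replace (2 * ((Rabs K + eps + 1) * (c - s))) with ((2 * (Rabs K + eps + 1)) * (c - s)) by ring.
          apply Rle_trans with ((2 * (Rabs K + eps + 1)) * (eta / (2 * (Rabs K + eps + 1)))).
          apply Rmult_le_compat_l; lra. right. field. lra. }
        pose proof (Rabs_pos K). unfold eta in *. nra. }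
    assert (Ecb : c = b).
    { destruct (Req_dec c b) as [|Ncb]; auto. exfalso.
      destruct (HD c Hac ltac:(lra) eps Heps) as [delta [Hdel Hd]].
      set (h := Rmin (delta/2) (b - c)).
      assert (Hh1 : 0 < h) by (apply Rmin_pos; lra).
      assert (Hh2 : h < delta) by (unfold h; pose proof (Rmin_l (delta/2) (b-c)); lra).
      assert (Hh3 : c + h <= b) by (unfold h; pose proof (Rmin_r (delta/2) (b-c)); lra).
      assert (E (c + h)).
      { split. lra. intros s Hs.
        destruct (Rlt_le_dec c s) as [Hcs|Hcs].
        - unfold P in *. specialize (Hd (s - c) ltac:(lra) ltac:(lra) ltac:(lra)).
          replace (c + (s - c)) with s in Hd by ring. nra.
        - destruct (Req_dec s c) as [->|]; auto. apply C1; lra. }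
      assert (c + h <= c) by (apply Hub; auto). lra. }
    rewrite Ecb in C2. exact C2. }
  destruct (Rle_lt_dec (g b) (g a)) as [ok|bad]; auto.
  exfalso.
  set (eps := (g b - g a) / (2 * (b - a + 1))).
  assert (0 < eps) by (apply Rdiv_lt_0_compat; lra).
  specialize (Main eps H).
  assert (eps * (2 * (b - a + 1)) = g b - g a) by (unfold eps; field; lra).
  nra.
Qed.

Lemma pow2_ge n : INR n <= 2 ^ n.
Proof.
  induction n. simpl. lra. rewrite S_INR. simpl.
  pose proof (pow_le 2 n ltac:(lra)). destruct n. simpl. lra.
  assert (1 <= 2 ^ S n) by (apply pow_R1_Rle; lra). lra.
Qed.

Lemma halving x M : (forall n, x <= M / 2 ^ n) -> x <= 0.
Proof.
  intros H. destruct (Rle_lt_dec x 0) as [|Hx]; auto. exfalso.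
  destruct (archimed (M / x)) as [Hn _].
  assert (Hup : 0 <= IZR (up (M / x))).
  { assert (H0 := H 0%nat). simpl in H0. 
    assert (0 < M / x) by (apply Rdiv_lt_0_compat; lra). lra. }
  destruct (IZN (up (M/x))) as [n Hn2]. { apply le_IZR. lra. }
  rewrite Hn2 in Hn. rewrite <- INR_IZR_INZ in Hn.
  specialize (H n). pose proof (pow2_ge n).
  assert (Hp : 0 < 2 ^ n) by (apply pow_lt; lra).
  assert (x * 2 ^ n <= M).
  { apply Rmult_le_reg_r with (/ 2 ^ n). apply Rinv_0_lt_compat; auto.
    rewrite Rmult_assoc, Rinv_r by lra. unfold Rdiv in H. lra. }
  assert (M / x * x = M) by (field; lra).
  nra.
Qed.

Lemma gl (g : R -> R) (a c : R) :
  0 <= c ->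
  (forall t, a <= t -> 0 <= g t) -> g a = 0 ->
  (forall b, a <= b -> exists M K, forall s t, a <= s -> s <= t -> t <= b ->
       g t <= M /\ Rabs (g t - g s) <= K * (t - s)) ->
  (forall t, a <= t -> forall eps, 0 < eps -> exists delta, 0 < delta /\
      forall h, 0 < h -> h < delta -> g (t + h) - g t <= (c * g t + eps) * h) ->
  forall t, a <= t -> g t = 0.
Proof.
  intros Hc Hpos Ha Hbd HD.
  set (T := / (2 * c + 2)).
  assert (HT : 0 < T) by (apply Rinv_0_lt_compat; lra).
  assert (HcT : c * T <= 1/2).
  { unfold T. apply Rmult_le_reg_r with (2*c+2). lra.
    rewrite Rmult_assoc, Rinv_l by lra. lra. }
  assert (Step : forall a0, a <= a0 -> g a0 = 0 -> forall t, a0 <= t <= a0 + T -> g t = 0).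
  { intros a0 Ha0 Hg0 t Ht.
    destruct (Hbd (a0 + T) ltac:(lra)) as [M [K HMK]].
    assert (Hn : forall n, forall t, a0 <= t <= a0 + T -> g t <= M / 2 ^ n).
    { induction n as [|n IH]; intros t1 Ht1.
      - simpl. replace (M/1) with M by field. apply (HMK t1 t1); lra.
      - set (q := c * (M / 2 ^ n)).
        assert (Hq0 : 0 <= q).
        { unfold q. apply Rmult_le_pos; auto. apply Rle_trans with (g a0). rewrite Hg0; lra. apply IH; lra. }
        set (f := fun s => g s - q * (s - a0)).
        assert (f t1 <= f a0).
        { apply (dini_le f a0 t1 (K + q)). lra.
          - intros s u Hs Hsu Hu. unfold f.
            destruct (HMK s u ltac:(lra) Hsu ltac:(lra)) as [_ HK].
            replace (g u - q * (u - a0) - (g s - q * (s - a0))) with ((g u - g s) + (- (q * (u - s)))) by ring.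
            eapply Rle_trans. apply Rabs_triang. rewrite Rabs_Ropp. rewrite (Rabs_right (q * (u - s))) by (apply Rle_ge, Rmult_le_pos; lra). lra.
          - intros s Hs Hs2 eps Heps. destruct (HD s ltac:(lra) eps Heps) as [d [Hd HDd]].
            exists d. split; auto. intros h Hh Hhd Hsh. unfold f.
            specialize (HDd h Hh Hhd). assert (g s <= M / 2 ^ n) by (apply IH; lra).
            assert (c * g s <= q) by (unfold q; apply Rmult_le_compat_l; auto).
            nra. }
        unfold f in H. replace (g a0) with 0 in H by auto.
        assert (q * (t1 - a0) <= M / 2 ^ (S n)).
        { unfold q. simpl. assert (0 < 2^n) by (apply pow_lt; lra).
          assert (0 <= M / 2 ^ n) by (apply Rle_trans with (g a0); [rewrite Hg0; lra | apply IH; lra]).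
          replace (M / (2 * 2 ^ n)) with ((M / 2 ^ n) * (1/2)) by (field; lra).
          apply Rle_trans with (c * (M / 2 ^ n) * T). apply Rmult_le_compat_l. nra. lra.
          replace (c * (M / 2 ^ n) * T) with ((M / 2 ^ n) * (c * T)) by ring.
          apply Rmult_le_compat_l; lra. }
        lra. }
    assert (g t <= 0) by (apply (halving (g t) M); intro n; apply Hn; lra).
    pose proof (Hpos t ltac:(lra)). lra. }
  assert (Ind : forall N : nat, forall t, a <= t <= a + INR N * T -> g t = 0).
  { induction N as [|N IH]; intros t1 Ht1.
    - simpl in Ht1. replace t1 with a by lra. auto.
    - rewrite S_INR in Ht1. destruct (Rle_lt_dec t1 (a + INR N * T)).
      + apply IH; lra.
      + apply (Step (a + INR N * T)). pose proof (pos_INR N). nra.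
        apply IH. pose proof (pos_INR N). nra. lra. }
  intros t Ht.
  destruct (archimed ((t - a) / T)) as [H1 _].
  destruct (IZN (up ((t - a) / T))) as [N HN].
  { apply le_IZR. assert (0 <= (t-a)/T) by (unfold Rdiv; apply Rmult_le_pos; [lra | left; apply Rinv_0_lt_compat; lra]). lra. }
  rewrite HN, <- INR_IZR_INZ in H1.
  apply (Ind N). split; auto.
  assert ((t - a) / T * T = t - a) by (field; lra). nra.
Qed.

Lemma int_sub (f F : R -> R) :
  (forall t, 0 <= t -> is_RInt f 0 t (F t - F 0)) ->
  forall s t, 0 <= s -> s <= t -> is_RInt f s t (F t - F s).
Proof.
  intros H s t Hs Hst.
  destruct (Req_dec s t) as [<-|Nst].
  - replace (F s - F s) with 0 by ring. exact (is_RInt_point f s).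
  - destruct (Req_dec s 0) as [->|Ns0].
    + apply H; lra.
    + assert (Hc := is_RInt_Chasles_2 f 0 s t _ _ ltac:(lra) (H t ltac:(lra)) (H s ltac:(lra))).
      replace (F t - F s) with (minus (F t - F 0) (F s - F 0)). exact Hc.
      unfold minus, plus, opp; simpl. ring.
Qed.

Lemma int_bounds (f : R -> R) s t l m M :
  is_RInt f s t l -> s <= t -> (forall tau, s < tau < t -> m <= f tau <= M) ->
  m * (t - s) <= l <= M * (t - s).
Proof.
  intros Hi Hst Hb. split.
  - assert (H := is_RInt_le (fun _ => m) f s t (scal (t - s) m) l Hst (is_RInt_const s t m) Hi
      ltac:(intros; apply Hb; auto)).
    change (scal (t - s) m) with ((t - s) * m) in H. lra.
  - assert (H := is_RInt_le f (fun _ => M) s t l (scal (t - s) M) Hst Hi (is_RInt_const s t M)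
      ltac:(intros; apply Hb; auto)).
    change (scal (t - s) M) with ((t - s) * M) in H. lra.
Qed.

Lemma int_lower (f : R -> R) s t l m :
  is_RInt f s t l -> s <= t -> (forall tau, s < tau < t -> m <= f tau) -> m * (t - s) <= l.
Proof.
  intros Hi Hst Hb.
  assert (H := is_RInt_le (fun _ => m) f s t (scal (t - s) m) l Hst (is_RInt_const s t m) Hi
      ltac:(intros; apply Hb; auto)).
  change (scal (t - s) m) with ((t - s) * m) in H. lra.
Qed.

Lemma int_upper (f : R -> R) s t l M :
  is_RInt f s t l -> s <= t -> (forall tau, s < tau < t -> f tau <= M) -> l <= M * (t - s).
Proof.
  intros Hi Hst Hb.
  assert (H := is_RInt_le f (fun _ => M) s t l (scal (t - s) M) Hst Hi (is_RInt_const s t M)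
      ltac:(intros; apply Hb; auto)).
  change (scal (t - s) M) with ((t - s) * M) in H. lra.
Qed.

Lemma int_scal_l (f : R -> R) s t l c : is_RInt f s t l -> is_RInt (fun tau => c * f tau) s t (c * l).
Proof. intro H. exact (is_RInt_scal f s t c l H). Qed.

Lemma abs_le_of_sq X r : 0 <= r -> X ^ 2 <= r ^ 2 -> Rabs X <= r.
Proof.
  intros Hr H. destruct (Rle_lt_dec (Rabs X) r) as [|Hl]; auto.
  rewrite <- (pow2_abs X) in H. pose proof (Rabs_pos X). nra.
Qed.

Lemma rot_id a b p : (a * cos p + b * sin p) ^ 2 + (a * sin p - b * cos p) ^ 2 = a ^ 2 + b ^ 2.
Proof.
  pose proof (sin2_cos2 p) as H. unfold Rsqr in H.
  replace ((a * cos p + b * sin p) ^ 2 + (a * sin p - b * cos p) ^ 2)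
    with ((a^2 + b^2) * (sin p * sin p + cos p * cos p)) by ring.
  rewrite H. ring.
Qed.

Lemma abs4 a b c d : Rabs (a + b + c + d) <= Rabs a + Rabs b + Rabs c + Rabs d.
Proof.
  eapply Rle_trans. apply Rabs_triang. eapply Rle_trans. apply Rplus_le_compat_r. apply Rabs_triang.
  eapply Rle_trans. apply Rplus_le_compat_r. apply Rplus_le_compat_r. apply Rabs_triang. lra.
Qed.

Lemma abs_mul_le a b A' B' : Rabs a <= A' -> Rabs b <= B' -> Rabs (a * b) <= A' * B'.
Proof.
  intros Ha Hb. rewrite Rabs_mult. apply Rmult_le_compat; auto using Rabs_pos.
Qed.

Lemma abs_cos_le1 p : Rabs (cos p) <= 1.
Proof. apply Rabs_le. pose proof (COS_bound p). lra. Qed.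
Lemma abs_sin_le1 p : Rabs (sin p) <= 1.
Proof. apply Rabs_le. pose proof (SIN_bound p). lra. Qed.

Section Main.
Variables xT yT V k ra : R.
Variables x y psi : R -> R.
Hypothesis HV : 0 < V.
Hypothesis Hk : 0 < k.
Hypothesis Hra : 0 <= ra.
Hypothesis HCL : closed_loop V k ra xT yT x y psi.
Hypothesis Hr : forall t, 0 <= t -> 0 < dist_T xT yT (x t) (y t).

Definition u1 t := xT - x t.
Definition u2 t := yT - y t.
Definition Aq t := u1 t * cos (psi t) + u2 t * sin (psi t).
Definition Bq t := u1 t * sin (psi t) - u2 t * cos (psi t).
Definition R2 t := u1 t ^ 2 + u2 t ^ 2.
Definition rr t := dist_T xT yT (x t) (y t).
Definition w t := omega_law k V ra xT yT (x t) (y t) (psi t).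
Definition UU t := Rabs (u1 t) + Rabs (u2 t).

Lemma rr_sq t : rr t ^ 2 = R2 t.
Proof.
  unfold rr, dist_T, R2, u1, u2. rewrite pow2_sqrt. ring. apply Rplus_le_le_0_compat; apply pow2_ge_0.
Qed.

Lemma AB_sq t : Aq t ^ 2 + Bq t ^ 2 = R2 t.
Proof. unfold Aq, Bq, R2. apply rot_id. Qed.

Lemma rr_nonneg t : 0 <= rr t.
Proof. unfold rr, dist_T. apply sqrt_pos. Qed.

Lemma A_le_rr t : Rabs (Aq t) <= rr t.
Proof. apply abs_le_of_sq. apply rr_nonneg. rewrite rr_sq, <- AB_sq. nra. Qed.

Lemma B_le_rr t : Rabs (Bq t) <= rr t.
Proof. apply abs_le_of_sq. apply rr_nonneg. rewrite rr_sq, <- AB_sq. nra. Qed.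

Lemma rr_le_UU t : rr t <= UU t.
Proof.
  unfold UU. rewrite <- (Rabs_right (rr t)) by (apply Rle_ge, rr_nonneg).
  apply abs_le_of_sq. pose proof (Rabs_pos (u1 t)); pose proof (Rabs_pos (u2 t)); lra.
  rewrite rr_sq. unfold R2. rewrite <- (pow2_abs (u1 t)), <- (pow2_abs (u2 t)).
  pose proof (Rabs_pos (u1 t)); pose proof (Rabs_pos (u2 t)); nra.
Qed.

Lemma A_le_UU t : Rabs (Aq t) <= UU t.
Proof. eapply Rle_trans. apply A_le_rr. apply rr_le_UU. Qed.
Lemma B_le_UU t : Rabs (Bq t) <= UU t.
Proof. eapply Rle_trans. apply B_le_rr. apply rr_le_UU. Qed.

Lemma w_char t : 0 <= t ->
  (rr t < ra /\ w t = 0) \/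
  (ra <= rr t /\ exists S, 0 <= S <= 1 /\ w t * rr t = k * V * (Aq t - S * rr t)).
Proof.
  intro Ht. pose proof (Hr t Ht) as Hpos. fold (rr t) in Hpos.
  unfold w, omega_law. cbv zeta. fold (rr t).
  destruct (Rle_dec ra (rr t)) as [Hle|Hlt].
  - right. split; auto.
    assert (Hz : -1 <= ra / rr t <= 1).
    { split. apply Rle_trans with 0. lra. unfold Rdiv. apply Rmult_le_pos; auto.
      left; apply Rinv_0_lt_compat; auto.
      apply Rmult_le_reg_r with (rr t); auto. unfold Rdiv. rewrite Rmult_assoc, Rinv_l by lra. lra. }
    exists (sqrt (1 - (ra / rr t)²)). split. split. apply sqrt_pos.
    apply Rle_trans with (sqrt 1); [apply sqrt_le_1_alt; pose proof (Rle_0_sqr (ra / rr t)); lra | rewrite sqrt_1; lra].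
    rewrite Rtrigo_facts.cos_pi_minus, cos_asin by auto.
    unfold rdot. fold (rr t). unfold Aq, u1, u2. field. lra.
  - left. split. lra. ring.
Qed.

Lemma w_bound t : 0 <= t -> Rabs (w t) <= 2 * k * V.
Proof.
  intro Ht. pose proof (Hr t Ht) as Hpos. fold (rr t) in Hpos.
  destruct (w_char t Ht) as [[_ H]|[_ [S [HS H]]]].
  - rewrite H, Rabs_R0. nra.
  - apply Rmult_le_reg_r with (rr t); auto.
    rewrite <- (Rabs_right (rr t)) at 1 by lra. rewrite <- Rabs_mult, H.
    rewrite Rabs_mult. rewrite (Rabs_right (k * V)) by nra.
    pose proof (A_le_rr t). 
    assert (Rabs (Aq t - S * rr t) <= 2 * rr t).
    { eapply Rle_trans. apply Rabs_triang. rewrite Rabs_Ropp, Rabs_mult, (Rabs_right (rr t)) by lra.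
      rewrite (Rabs_right S) by lra. nra. }
    assert (0 < k * V) by nra. nra.
Qed.

Lemma IX s t : 0 <= s -> s <= t -> is_RInt (fun tau => V * cos (psi tau)) s t (x t - x s).
Proof. intros. apply (int_sub _ x); auto. intros; apply HCL; auto. Qed.
Lemma IY s t : 0 <= s -> s <= t -> is_RInt (fun tau => V * sin (psi tau)) s t (y t - y s).
Proof. intros. apply (int_sub _ y); auto. intros; apply HCL; auto. Qed.
Lemma IW s t : 0 <= s -> s <= t -> is_RInt w s t (psi t - psi s).
Proof. intros. apply (int_sub _ psi); auto. intros; apply HCL; auto. Qed.

Lemma psi_lip s t : 0 <= s -> s <= t -> Rabs (psi t - psi s) <= 2 * k * V * (t - s).
Proof.
  intros Hs Hst. apply Rabs_le.
  assert (H := int_bounds w s t _ (- (2 * k * V)) (2 * k * V) (IW s t Hs Hst) Hst).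
  assert (H' : forall tau, s < tau < t -> - (2 * k * V) <= w tau <= 2 * k * V).
  { intros tau Ht. apply Rabs_le_between. apply w_bound. lra. }
  specialize (H H'). lra.
Qed.

Lemma x_lip s t : 0 <= s -> s <= t -> Rabs (x t - x s) <= V * (t - s).
Proof.
  intros Hs Hst. apply Rabs_le.
  assert (H := int_bounds _ s t _ (- V) V (IX s t Hs Hst) Hst).
  assert (H' : forall tau, s < tau < t -> - V <= V * cos (psi tau) <= V).
  { intros tau Ht. pose proof (COS_bound (psi tau)). split; nra. }
  specialize (H H'). lra.
Qed.

Lemma y_lip s t : 0 <= s -> s <= t -> Rabs (y t - y s) <= V * (t - s).
Proof.
  intros Hs Hst. apply Rabs_le.
  assert (H := int_bounds _ s t _ (- V) V (IY s t Hs Hst) Hst).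
  assert (H' : forall tau, s < tau < t -> - V <= V * sin (psi tau) <= V).
  { intros tau Ht. pose proof (SIN_bound (psi tau)). split; nra. }
  specialize (H H'). lra.
Qed.

Lemma x_lin s t : 0 <= s -> s <= t ->
  Rabs (x t - x s - V * (t - s) * cos (psi s)) <= 2 * k * V ^ 2 * (t - s) ^ 2.
Proof.
  intros Hs Hst. apply Rabs_le.
  set (e := 2 * k * V ^ 2 * (t - s)).
  assert (H := int_bounds _ s t _ (V * cos (psi s) - e) (V * cos (psi s) + e) (IX s t Hs Hst) Hst).
  assert (H' : forall tau, s < tau < t -> V * cos (psi s) - e <= V * cos (psi tau) <= V * cos (psi s) + e).
  { intros tau Ht. apply Rabs_le_between'.
    replace (V * cos (psi tau) - V * cos (psi s)) with (V * (cos (psi tau) - cos (psi s))) by ring.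
    rewrite Rabs_mult, (Rabs_right V) by lra.
    pose proof (abs_cos_diff (psi tau) (psi s)). pose proof (psi_lip s tau Hs ltac:(lra)).
    assert (2*k*V*(tau - s) <= 2*k*V*(t-s)) by (apply Rmult_le_compat_l; nra).
    assert (Rabs (cos (psi tau) - cos (psi s)) <= 2*k*V*(t-s)) by lra.
    unfold e. replace (2 * k * V ^ 2 * (t - s)) with (V * (2*k*V*(t-s))) by ring.
    apply Rmult_le_compat_l; lra. }
  specialize (H H').
  replace ((V * cos (psi s) - e) * (t - s)) with (V * (t - s) * cos (psi s) - 2 * k * V ^ 2 * (t - s) ^ 2) in H by (unfold e; ring).
  replace ((V * cos (psi s) + e) * (t - s)) with (V * (t - s) * cos (psi s) + 2 * k * V ^ 2 * (t - s) ^ 2) in H by (unfold e; ring).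
  lra.
Qed.

Lemma y_lin s t : 0 <= s -> s <= t ->
  Rabs (y t - y s - V * (t - s) * sin (psi s)) <= 2 * k * V ^ 2 * (t - s) ^ 2.
Proof.
  intros Hs Hst. apply Rabs_le.
  set (e := 2 * k * V ^ 2 * (t - s)).
  assert (H := int_bounds _ s t _ (V * sin (psi s) - e) (V * sin (psi s) + e) (IY s t Hs Hst) Hst).
  assert (H' : forall tau, s < tau < t -> V * sin (psi s) - e <= V * sin (psi tau) <= V * sin (psi s) + e).
  { intros tau Ht. apply Rabs_le_between'.
    replace (V * sin (psi tau) - V * sin (psi s)) with (V * (sin (psi tau) - sin (psi s))) by ring.
    rewrite Rabs_mult, (Rabs_right V) by lra.
    pose proof (abs_sin_diff (psi tau) (psi s)). pose proof (psi_lip s tau Hs ltac:(lra)).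
    assert (2*k*V*(tau - s) <= 2*k*V*(t-s)) by (apply Rmult_le_compat_l; nra).
    assert (Rabs (sin (psi tau) - sin (psi s)) <= 2*k*V*(t-s)) by lra.
    unfold e. replace (2 * k * V ^ 2 * (t - s)) with (V * (2*k*V*(t-s))) by ring.
    apply Rmult_le_compat_l; lra. }
  specialize (H H').
  replace ((V * sin (psi s) - e) * (t - s)) with (V * (t - s) * sin (psi s) - 2 * k * V ^ 2 * (t - s) ^ 2) in H by (unfold e; ring).
  replace ((V * sin (psi s) + e) * (t - s)) with (V * (t - s) * sin (psi s) + 2 * k * V ^ 2 * (t - s) ^ 2) in H by (unfold e; ring).
  lra.
Qed.

Lemma UU_grow t : 0 <= t -> UU t <= UU 0 + 2 * V * t.
Proof.
  intro Ht. unfold UU, u1, u2.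
  pose proof (x_lip 0 t ltac:(lra) Ht). pose proof (y_lip 0 t ltac:(lra) Ht).
  assert (E1 : Rabs (xT - x t) <= Rabs (xT - x 0) + Rabs (x t - x 0)).
  { replace (xT - x t) with ((xT - x 0) + - (x t - x 0)) by ring.
    eapply Rle_trans. apply Rabs_triang. rewrite Rabs_Ropp. lra. }
  assert (E2 : Rabs (yT - y t) <= Rabs (yT - y 0) + Rabs (y t - y 0)).
  { replace (yT - y t) with ((yT - y 0) + - (y t - y 0)) by ring.
    eapply Rle_trans. apply Rabs_triang. rewrite Rabs_Ropp. lra. }
  lra.
Qed.

Definition KL b := 2 * V + 2 * k * V * (UU 0 + 2 * V * b).

Lemma KL_pos b : 0 <= b -> 0 < KL b.
Proof.
  intro. unfold KL.
  assert (0 <= UU 0 + 2 * V * b) by (unfold UU; pose proof (Rabs_pos (u1 0)); pose proof (Rabs_pos (u2 0)); nra).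
  assert (0 <= 2 * k * V * (UU 0 + 2 * V * b)) by (repeat apply Rmult_le_pos; lra). lra.
Qed.

Lemma UU0_pos : 0 <= UU 0.
Proof. unfold UU; pose proof (Rabs_pos (u1 0)); pose proof (Rabs_pos (u2 0)); lra. Qed.

Lemma A_lip s t b : 0 <= s -> s <= t -> t <= b -> Rabs (Aq t - Aq s) <= KL b * (t - s).
Proof.
  intros Hs Hst Htb. unfold Aq.
  replace (u1 t * cos (psi t) + u2 t * sin (psi t) - (u1 s * cos (psi s) + u2 s * sin (psi s)))
    with ((u1 t - u1 s) * cos (psi t) + u1 s * (cos (psi t) - cos (psi s))
          + (u2 t - u2 s) * sin (psi t) + u2 s * (sin (psi t) - sin (psi s))) by ring.
  eapply Rle_trans. apply abs4.
  assert (H1 : Rabs ((u1 t - u1 s) * cos (psi t)) <= V * (t - s) * 1).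
  { apply abs_mul_le. unfold u1. replace (xT - x t - (xT - x s)) with (- (x t - x s)) by ring.
    rewrite Rabs_Ropp. apply x_lip; lra. apply abs_cos_le1. }
  assert (H3 : Rabs ((u2 t - u2 s) * sin (psi t)) <= V * (t - s) * 1).
  { apply abs_mul_le. unfold u2. replace (yT - y t - (yT - y s)) with (- (y t - y s)) by ring.
    rewrite Rabs_Ropp. apply y_lip; lra. apply abs_sin_le1. }
  assert (Hp := psi_lip s t Hs Hst).
  assert (H2 : Rabs (u1 s * (cos (psi t) - cos (psi s))) <= Rabs (u1 s) * (2 * k * V * (t - s))).
  { apply abs_mul_le. lra. eapply Rle_trans. apply abs_cos_diff. auto. }
  assert (H4 : Rabs (u2 s * (sin (psi t) - sin (psi s))) <= Rabs (u2 s) * (2 * k * V * (t - s))).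
  { apply abs_mul_le. lra. eapply Rle_trans. apply abs_sin_diff. auto. }
  pose proof (UU_grow s Hs). unfold UU in *. unfold KL, UU.
  assert (Rabs (u1 s) + Rabs (u2 s) <= Rabs (u1 0) + Rabs (u2 0) + 2 * V * b) by nra.
  assert (0 <= k * V * (t - s)) by (apply Rmult_le_pos; nra).
  nra.
Qed.

Lemma B_lip s t b : 0 <= s -> s <= t -> t <= b -> Rabs (Bq t - Bq s) <= KL b * (t - s).
Proof.
  intros Hs Hst Htb. unfold Bq.
  replace (u1 t * sin (psi t) - u2 t * cos (psi t) - (u1 s * sin (psi s) - u2 s * cos (psi s)))
    with ((u1 t - u1 s) * sin (psi t) + u1 s * (sin (psi t) - sin (psi s))
          + (- (u2 t - u2 s)) * cos (psi t) + (- u2 s) * (cos (psi t) - cos (psi s))) by ring.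
  eapply Rle_trans. apply abs4.
  assert (H1 : Rabs ((u1 t - u1 s) * sin (psi t)) <= V * (t - s) * 1).
  { apply abs_mul_le. unfold u1. replace (xT - x t - (xT - x s)) with (- (x t - x s)) by ring.
    rewrite Rabs_Ropp. apply x_lip; lra. apply abs_sin_le1. }
  assert (H3 : Rabs (- (u2 t - u2 s) * cos (psi t)) <= V * (t - s) * 1).
  { apply abs_mul_le. unfold u2. replace (- (yT - y t - (yT - y s))) with (y t - y s) by ring.
    apply y_lip; lra. apply abs_cos_le1. }
  assert (Hp := psi_lip s t Hs Hst).
  assert (H2 : Rabs (u1 s * (sin (psi t) - sin (psi s))) <= Rabs (u1 s) * (2 * k * V * (t - s))).
  { apply abs_mul_le. lra. eapply Rle_trans. apply abs_sin_diff. auto. }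
  assert (H4 : Rabs (- u2 s * (cos (psi t) - cos (psi s))) <= Rabs (u2 s) * (2 * k * V * (t - s))).
  { apply abs_mul_le. rewrite Rabs_Ropp. lra. eapply Rle_trans. apply abs_cos_diff. auto. }
  pose proof (UU_grow s Hs). unfold UU in *. unfold KL, UU.
  assert (Rabs (u1 s) + Rabs (u2 s) <= Rabs (u1 0) + Rabs (u2 0) + 2 * V * b) by nra.
  assert (0 <= k * V * (t - s)) by (apply Rmult_le_pos; nra).
  nra.
Qed.

Definition KR b := 2 * V * (UU 0 + 2 * V * b).

Lemma R2_lip s t b : 0 <= s -> s <= t -> t <= b -> Rabs (R2 t - R2 s) <= KR b * (t - s).
Proof.
  intros Hs Hst Htb. unfold R2.
  replace (u1 t ^ 2 + u2 t ^ 2 - (u1 s ^ 2 + u2 s ^ 2))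
    with ((u1 t - u1 s) * (u1 t + u1 s) + (u2 t - u2 s) * (u2 t + u2 s)) by ring.
  eapply Rle_trans. apply Rabs_triang.
  assert (Hx : Rabs (u1 t - u1 s) <= V * (t - s)).
  { unfold u1. replace (xT - x t - (xT - x s)) with (- (x t - x s)) by ring.
    rewrite Rabs_Ropp. apply x_lip; lra. }
  assert (Hy : Rabs (u2 t - u2 s) <= V * (t - s)).
  { unfold u2. replace (yT - y t - (yT - y s)) with (- (y t - y s)) by ring.
    rewrite Rabs_Ropp. apply y_lip; lra. }
  assert (H1 := abs_mul_le _ _ _ _ Hx (Rabs_triang (u1 t) (u1 s))).
  assert (H2 := abs_mul_le _ _ _ _ Hy (Rabs_triang (u2 t) (u2 s))).
  pose proof (UU_grow s Hs). pose proof (UU_grow t ltac:(lra)). unfold UU in *. unfold KR, UU.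
  assert (Rabs (u1 s) + Rabs (u2 s) + (Rabs (u1 t) + Rabs (u2 t)) <= 2 * (Rabs (u1 0) + Rabs (u2 0) + 2 * V * b)) by nra.
  assert (0 <= V * (t - s)) by nra.
  nra.
Qed.

Definition Cst t := 6 * k ^ 2 * V ^ 2 * UU t + 6 * k * V ^ 2 + 4 * k * V ^ 2 * UU t + 2 * V ^ 2.

Lemma UU_pos t : 0 <= UU t.
Proof. unfold UU; pose proof (Rabs_pos (u1 t)); pose proof (Rabs_pos (u2 t)); lra. Qed.

Lemma d_bounds t h : 0 <= t -> 0 <= h -> h <= / (2 * k * V) ->
  Rabs (psi (t + h) - psi t) <= 2 * k * V * h /\ Rabs (psi (t + h) - psi t) <= 1.
Proof.
  intros Ht Hh Hh2. pose proof (psi_lip t (t + h) Ht ltac:(lra)).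
  replace (t + h - t) with h in H by ring. split; auto.
  eapply Rle_trans. apply H.
  assert (0 < 2 * k * V) by nra.
  apply Rmult_le_reg_r with (/ (2 * k * V)). apply Rinv_0_lt_compat; auto.
  rewrite (Rmult_comm (2*k*V) h), Rmult_assoc, Rinv_r by lra. lra.
Qed.

Lemma e_bounds t h : 0 <= t -> 0 <= h ->
  Rabs (x (t + h) - x t - V * h * cos (psi t)) <= 2 * k * V ^ 2 * h ^ 2 /\ Rabs (y (t + h) - y t - V * h * sin (psi t)) <= 2 * k * V ^ 2 * h ^ 2.
Proof.
  intros Ht Hh. pose proof (x_lin t (t + h) Ht ltac:(lra)). pose proof (y_lin t (t + h) Ht ltac:(lra)).
  replace (t + h - t) with h in * by ring. split; auto.
Qed.

Lemma EB t h : 0 <= t -> 0 <= h -> h <= / (2 * k * V) ->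
  Rabs (Bq (t + h) - Bq t - Aq t * (psi (t + h) - psi t)) <= Cst t * h ^ 2.
Proof.
  intros Ht Hh Hh2.
  destruct (d_bounds t h Ht Hh Hh2) as [Hd1 Hd2].
  destruct (e_bounds t h Ht Hh) as [He1 He2].
  set (d := psi (t + h) - psi t) in *.
  set (e1 := x (t + h) - x t - V * h * cos (psi t)) in *.
  set (e2 := y (t + h) - y t - V * h * sin (psi t)) in *.
  assert (Hpsi : psi (t + h) = psi t + d) by (unfold d; ring).
  assert (Hx : x (t + h) = x t + V * h * cos (psi t) + e1) by (unfold e1; ring).
  assert (Hy : y (t + h) = y t + V * h * sin (psi t) + e2) by (unfold e2; ring).
  assert (Id : Bq (t + h) - Bq t - Aq t * d =
     (cos d - 1) * Bq t + (sin d - d) * Aq t + (- (V * h * sin d))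
     + (- (e1 * sin (psi t + d) - e2 * cos (psi t + d)))).
  { unfold Bq, Aq, u1, u2. rewrite Hpsi, Hx, Hy. rewrite sin_plus, cos_plus.
    pose proof (sin2_cos2 (psi t)) as Hsc. unfold Rsqr in Hsc.
    apply Rminus_diag_uniq.
    first [ transitivity (V * h * sin d * (sin (psi t) * sin (psi t) + cos (psi t) * cos (psi t) - 1));
              [ring | rewrite Hsc; ring]
          | transitivity (- (V * h * sin d * (sin (psi t) * sin (psi t) + cos (psi t) * cos (psi t) - 1)));
              [ring | rewrite Hsc; ring] ]. }
  rewrite Id. eapply Rle_trans. apply abs4.
  pose proof (one_minus_cos d) as Hc. pose proof (sin_minus_id d Hd2) as Hs.
  pose proof (abs_sin_le d) as Hsd.
  pose proof (B_le_UU t). pose proof (A_le_UU t). pose proof (UU_pos t).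
  assert (Hd2' : d ^ 2 <= 4 * k ^ 2 * V ^ 2 * h ^ 2).
  { rewrite <- pow2_abs. replace (4 * k ^ 2 * V ^ 2 * h ^ 2) with ((2 * k * V * h) ^ 2) by ring.
    apply pow_incr. split. apply Rabs_pos. auto. }
  assert (T1 : Rabs ((cos d - 1) * Bq t) <= (2 * k ^ 2 * V ^ 2 * h ^ 2) * UU t).
  { apply abs_mul_le; auto. apply Rabs_le. lra. }
  assert (T2 : Rabs ((sin d - d) * Aq t) <= (4 * k ^ 2 * V ^ 2 * h ^ 2) * UU t).
  { apply abs_mul_le; auto. lra. }
  assert (T3 : Rabs (- (V * h * sin d)) <= V * h * (2 * k * V * h)).
  { rewrite Rabs_Ropp. rewrite Rabs_mult, (Rabs_right (V * h)) by nra. apply Rmult_le_compat_l. nra. lra. }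
  assert (T4 : Rabs (- (e1 * sin (psi t + d) - e2 * cos (psi t + d))) <= 2 * k * V ^ 2 * h ^ 2 * 1 + 2 * k * V ^ 2 * h ^ 2 * 1).
  { rewrite Rabs_Ropp. unfold Rminus. eapply Rle_trans. apply Rabs_triang.
    apply Rplus_le_compat. apply abs_mul_le; auto. apply abs_sin_le1.
    rewrite Rabs_Ropp. apply abs_mul_le; auto. apply abs_cos_le1. }
  unfold Cst.
  assert (0 <= k * V ^ 2 * h ^ 2) by (apply Rmult_le_pos; [nra| apply pow2_ge_0]).
  assert (0 <= 4 * k * V ^ 2 * UU t * h ^ 2 + 2 * V ^ 2 * h ^ 2).
  { apply Rplus_le_le_0_compat; repeat apply Rmult_le_pos; try lra; try apply pow2_ge_0. }
  nra.
Qed.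

Lemma EA t h : 0 <= t -> 0 <= h -> h <= / (2 * k * V) ->
  Rabs (Aq (t + h) - Aq t + Bq t * (psi (t + h) - psi t) + V * h) <= Cst t * h ^ 2.
Proof.
  intros Ht Hh Hh2.
  destruct (d_bounds t h Ht Hh Hh2) as [Hd1 Hd2].
  destruct (e_bounds t h Ht Hh) as [He1 He2].
  set (d := psi (t + h) - psi t) in *.
  set (e1 := x (t + h) - x t - V * h * cos (psi t)) in *.
  set (e2 := y (t + h) - y t - V * h * sin (psi t)) in *.
  assert (Hpsi : psi (t + h) = psi t + d) by (unfold d; ring).
  assert (Hx : x (t + h) = x t + V * h * cos (psi t) + e1) by (unfold e1; ring).
  assert (Hy : y (t + h) = y t + V * h * sin (psi t) + e2) by (unfold e2; ring).
  assert (Id : Aq (t + h) - Aq t + Bq t * d + V * h =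
     (cos d - 1) * Aq t + (- (sin d - d)) * Bq t + (- (V * h * (cos d - 1)))
     + (- (e1 * cos (psi t + d) + e2 * sin (psi t + d)))).
  { unfold Bq, Aq, u1, u2. rewrite Hpsi, Hx, Hy. rewrite sin_plus, cos_plus.
    pose proof (sin2_cos2 (psi t)) as Hsc. unfold Rsqr in Hsc.
    apply Rminus_diag_uniq.
    first [ transitivity (V * h * cos d * (sin (psi t) * sin (psi t) + cos (psi t) * cos (psi t) - 1));
              [ring | rewrite Hsc; ring]
          | transitivity (- (V * h * cos d * (sin (psi t) * sin (psi t) + cos (psi t) * cos (psi t) - 1)));
              [ring | rewrite Hsc; ring] ]. }
  rewrite Id. eapply Rle_trans. apply abs4.
  pose proof (one_minus_cos d) as Hc. pose proof (sin_minus_id d Hd2) as Hs.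
  pose proof (B_le_UU t). pose proof (A_le_UU t). pose proof (UU_pos t).
  assert (Hd2' : d ^ 2 <= 4 * k ^ 2 * V ^ 2 * h ^ 2).
  { rewrite <- pow2_abs. replace (4 * k ^ 2 * V ^ 2 * h ^ 2) with ((2 * k * V * h) ^ 2) by ring.
    apply pow_incr. split. apply Rabs_pos. auto. }
  assert (T1 : Rabs ((cos d - 1) * Aq t) <= (2 * k ^ 2 * V ^ 2 * h ^ 2) * UU t).
  { apply abs_mul_le; auto. apply Rabs_le. lra. }
  assert (T2 : Rabs ((- (sin d - d)) * Bq t) <= (4 * k ^ 2 * V ^ 2 * h ^ 2) * UU t).
  { apply abs_mul_le; auto. rewrite Rabs_Ropp. lra. }
  assert (Hdd : d ^ 2 <= Rabs d).
  { rewrite <- pow2_abs. pose proof (Rabs_pos d). simpl. nra. }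
  assert (T3 : Rabs (- (V * h * (cos d - 1))) <= V * h * (2 * k * V * h)).
  { rewrite Rabs_Ropp. rewrite Rabs_mult, (Rabs_right (V * h)) by nra. apply Rmult_le_compat_l. nra.
    apply Rabs_le. lra. }
  assert (T4 : Rabs (- (e1 * cos (psi t + d) + e2 * sin (psi t + d))) <= 2 * k * V ^ 2 * h ^ 2 * 1 + 2 * k * V ^ 2 * h ^ 2 * 1).
  { rewrite Rabs_Ropp. eapply Rle_trans. apply Rabs_triang.
    apply Rplus_le_compat. apply abs_mul_le; auto. apply abs_cos_le1.
    apply abs_mul_le; auto. apply abs_sin_le1. }
  unfold Cst.
  assert (0 <= k * V ^ 2 * h ^ 2) by (apply Rmult_le_pos; [nra| apply pow2_ge_0]).
  assert (0 <= 4 * k * V ^ 2 * UU t * h ^ 2 + 2 * V ^ 2 * h ^ 2).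
  { apply Rplus_le_le_0_compat; repeat apply Rmult_le_pos; try lra; try apply pow2_ge_0. }
  nra.
Qed.

Lemma ER t h : 0 <= t -> 0 <= h ->
  Rabs (R2 (t + h) - R2 t + 2 * V * h * Aq t) <= Cst t * h ^ 2.
Proof.
  intros Ht Hh.
  destruct (e_bounds t h Ht Hh) as [He1 He2].
  pose proof (x_lip t (t + h) Ht ltac:(lra)) as Hxl. pose proof (y_lip t (t + h) Ht ltac:(lra)) as Hyl.
  replace (t + h - t) with h in * by ring.
  set (e1 := x (t + h) - x t - V * h * cos (psi t)) in *.
  set (e2 := y (t + h) - y t - V * h * sin (psi t)) in *.
  set (dx := x (t + h) - x t) in *. set (dy := y (t + h) - y t) in *.
  assert (Id : R2 (t + h) - R2 t + 2 * V * h * Aq t =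
     (-2 * u1 t) * e1 + (-2 * u2 t) * e2 + dx * dx + dy * dy).
  { unfold R2, Aq, u1, u2, e1, e2, dx, dy. ring. }
  rewrite Id. eapply Rle_trans. apply abs4.
  assert (T1 : Rabs ((-2 * u1 t) * e1) <= (2 * Rabs (u1 t)) * (2 * k * V ^ 2 * h ^ 2)).
  { apply abs_mul_le; auto. rewrite Rabs_mult. replace (Rabs (-2)) with 2 by (rewrite Rabs_left; lra).
    lra. }
  assert (T2 : Rabs ((-2 * u2 t) * e2) <= (2 * Rabs (u2 t)) * (2 * k * V ^ 2 * h ^ 2)).
  { apply abs_mul_le; auto. rewrite Rabs_mult. replace (Rabs (-2)) with 2 by (rewrite Rabs_left; lra).
    lra. }
  assert (T3 : Rabs (dx * dx) <= (V * h) * (V * h)) by (apply abs_mul_le; auto).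
  assert (T4 : Rabs (dy * dy) <= (V * h) * (V * h)) by (apply abs_mul_le; auto).
  unfold Cst. pose proof (UU_pos t).
  assert (0 <= 6 * k ^ 2 * V ^ 2 * UU t * h ^ 2) by (repeat apply Rmult_le_pos; try lra; apply pow2_ge_0).
  assert (0 <= 6 * k * V ^ 2 * h ^ 2) by (repeat apply Rmult_le_pos; try lra; apply pow2_ge_0).
  assert (E1 : (2 * Rabs (u1 t)) * (2 * k * V ^ 2 * h ^ 2) + (2 * Rabs (u2 t)) * (2 * k * V ^ 2 * h ^ 2)
     = 4 * k * V ^ 2 * UU t * h ^ 2) by (unfold UU; ring).
  assert (E2 : (6 * k ^ 2 * V ^ 2 * UU t + 6 * k * V ^ 2 + 4 * k * V ^ 2 * UU t + 2 * V ^ 2) * h ^ 2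
     = 6 * k ^ 2 * V ^ 2 * UU t * h ^ 2 + 6 * k * V ^ 2 * h ^ 2 + 4 * k * V ^ 2 * UU t * h ^ 2 + 2 * V ^ 2 * h ^ 2) by ring.
  assert (E3 : V * h * (V * h) = V ^ 2 * h ^ 2) by ring.
  lra.
Qed.

Lemma Cst_pos t : 0 <= Cst t.
Proof.
  unfold Cst. pose proof (UU_pos t).
  assert (0 <= 6 * k ^ 2 * V ^ 2 * UU t) by (repeat apply Rmult_le_pos; try lra; apply pow2_ge_0).
  assert (0 <= 6 * k * V ^ 2) by (repeat apply Rmult_le_pos; try lra; apply pow2_ge_0).
  assert (0 <= 4 * k * V ^ 2 * UU t) by (repeat apply Rmult_le_pos; try lra; apply pow2_ge_0).
  assert (0 <= 2 * V ^ 2) by (repeat apply Rmult_le_pos; try lra; apply pow2_ge_0).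
  lra.
Qed.

Lemma small_delta (c eps : R) : 0 <= c -> 0 < eps ->
  exists delta, 0 < delta /\ delta <= 1 /\ delta <= / (2 * k * V) /\
    forall h, 0 <= h -> h < delta -> c * h <= eps.
Proof.
  intros Hc He.
  assert (H2 : 0 < / (2 * k * V)) by (apply Rinv_0_lt_compat; nra).
  assert (H3 : 0 < eps / (c + 1)) by (apply Rdiv_lt_0_compat; lra).
  exists (Rmin 1 (Rmin (/ (2 * k * V)) (eps / (c + 1)))).
  repeat split.
  - apply Rmin_pos; try lra. apply Rmin_pos; lra.
  - apply Rmin_l.
  - eapply Rle_trans. apply Rmin_r. apply Rmin_l.
  - intros h Hh Hd. assert (h < eps / (c + 1)).
    { eapply Rlt_le_trans. apply Hd. eapply Rle_trans. apply Rmin_r. apply Rmin_r. }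
    assert ((c + 1) * h < eps).
    { apply Rmult_lt_reg_r with (/ (c + 1)). apply Rinv_0_lt_compat; lra.
      replace ((c + 1) * h * / (c + 1)) with h by (field; lra). exact H. }
    nra.
Qed.

Lemma KEY_B t : 0 <= t -> forall eps, 0 < eps -> exists delta, 0 < delta /\
  forall h m, 0 < h -> h < delta -> (forall tau, t < tau < t + h -> m <= Aq tau * w tau) ->
  (m - eps) * h <= Bq (t + h) - Bq t.
Proof.
  intros Ht eps He.
  set (L := KL (t + 1)).
  assert (HL : 0 < L) by (apply KL_pos; lra).
  assert (Hc : 0 <= 2 * k * V * L + Cst t) by (pose proof (Cst_pos t); assert (0 <= 2*k*V*L) by (repeat apply Rmult_le_pos; lra); lra).
  destruct (small_delta _ eps Hc He) as [delta [Hd0 [Hd1 [Hd2 Hd3]]]].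
  exists delta. split; auto. intros h m Hh Hhd Hm.
  assert (Hi := int_scal_l _ _ _ _ (Aq t) (IW t (t + h) Ht ltac:(lra))).
  assert (Hlow : (m - 2 * k * V * L * h) * (t + h - t) <= Aq t * (psi (t + h) - psi t)).
  { apply (int_lower _ _ _ _ _ Hi). lra. intros tau Htau.
    specialize (Hm tau Htau).
    assert (HA := A_lip t tau (t + 1) Ht ltac:(lra) ltac:(lra)). fold L in HA.
    assert (Hw := w_bound tau ltac:(lra)).
    assert (Hprod : Rabs ((Aq tau - Aq t) * w tau) <= (L * h) * (2 * k * V)).
    { apply abs_mul_le; auto. eapply Rle_trans. apply HA.
      apply Rmult_le_compat_l; lra. }
    apply Rabs_le_between in Hprod.
    replace (Aq t * w tau) with (Aq tau * w tau - (Aq tau - Aq t) * w tau) by ring.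
    lra. }
  replace (t + h - t) with h in Hlow by ring.
  assert (HE := EB t h Ht ltac:(lra) ltac:(lra)). apply Rabs_le_between in HE.
  specialize (Hd3 h ltac:(lra) Hhd).
  assert (E1 : (m - 2 * k * V * L * h) * h = m * h - (2 * k * V * L) * h * h) by ring.
  assert (E2 : Cst t * h ^ 2 = Cst t * h * h) by ring.
  assert ((2 * k * V * L + Cst t) * h * h <= eps * h) by (apply Rmult_le_compat_r; lra).
  nra.
Qed.

Lemma KEY_A t : 0 <= t -> forall eps, 0 < eps -> exists delta, 0 < delta /\
  forall h M, 0 < h -> h < delta -> (forall tau, t < tau < t + h -> - Bq tau * w tau <= M) ->
  Aq (t + h) - Aq t <= (- V + M + eps) * h.
Proof.
  intros Ht eps He.
  set (L := KL (t + 1)).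
  assert (HL : 0 < L) by (apply KL_pos; lra).
  assert (Hc : 0 <= 2 * k * V * L + Cst t) by (pose proof (Cst_pos t); assert (0 <= 2*k*V*L) by (repeat apply Rmult_le_pos; lra); lra).
  destruct (small_delta _ eps Hc He) as [delta [Hd0 [Hd1 [Hd2 Hd3]]]].
  exists delta. split; auto. intros h M Hh Hhd Hm.
  assert (Hi := int_scal_l _ _ _ _ (- Bq t) (IW t (t + h) Ht ltac:(lra))).
  assert (Hup : - Bq t * (psi (t + h) - psi t) <= (M + 2 * k * V * L * h) * (t + h - t)).
  { apply (int_upper _ _ _ _ _ Hi). lra. intros tau Htau.
    specialize (Hm tau Htau).
    assert (HB := B_lip t tau (t + 1) Ht ltac:(lra) ltac:(lra)). fold L in HB.
    assert (Hw := w_bound tau ltac:(lra)).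
    assert (Hprod : Rabs ((Bq tau - Bq t) * w tau) <= (L * h) * (2 * k * V)).
    { apply abs_mul_le; auto. eapply Rle_trans. apply HB.
      apply Rmult_le_compat_l; lra. }
    apply Rabs_le_between in Hprod.
    replace (- Bq t * w tau) with (- Bq tau * w tau + (Bq tau - Bq t) * w tau) by ring.
    lra. }
  replace (t + h - t) with h in Hup by ring.
  assert (HE := EA t h Ht ltac:(lra) ltac:(lra)). apply Rabs_le_between in HE.
  specialize (Hd3 h ltac:(lra) Hhd).
  assert (E1 : (M + 2 * k * V * L * h) * h = M * h + (2 * k * V * L) * h * h) by ring.
  assert (E2 : Cst t * h ^ 2 = Cst t * h * h) by ring.
  assert ((2 * k * V * L + Cst t) * h * h <= eps * h) by (apply Rmult_le_compat_r; lra).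
  assert (E3 : - Bq t * (psi (t + h) - psi t) = - (Bq t * (psi (t + h) - psi t))) by ring.
  nra.
Qed.

Lemma KEY_R t : 0 <= t -> forall eps, 0 < eps -> exists delta, 0 < delta /\
  forall h, 0 < h -> h < delta -> Rabs (R2 (t + h) - R2 t + 2 * V * h * Aq t) <= eps * h.
Proof.
  intros Ht eps He.
  destruct (small_delta _ eps (Cst_pos t) He) as [delta [Hd0 [Hd1 [Hd2 Hd3]]]].
  exists delta. split; auto. intros h Hh Hhd.
  eapply Rle_trans. apply ER; lra.
  specialize (Hd3 h ltac:(lra) Hhd).
  replace (Cst t * h ^ 2) with ((Cst t * h) * h) by ring.
  apply Rmult_le_compat_r; lra.
Qed.

Lemma rr_pos t : 0 <= t -> 0 < rr t.
Proof. intro. apply Hr; auto. Qed.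

Lemma rr_sq' t : Aq t * Aq t + Bq t * Bq t = rr t * rr t.
Proof. pose proof (rr_sq t). pose proof (AB_sq t). simpl in *. lra. Qed.

Lemma P1 tau : 0 <= tau -> - (k * V) * Rabs (Bq tau) <= Aq tau * w tau.
Proof.
  intro Ht. pose proof (rr_pos tau Ht) as Hr0. pose proof (rr_sq' tau) as Hsq.
  pose proof (A_le_rr tau) as HA. pose proof (B_le_rr tau) as HB.
  assert (HkV : 0 < k * V) by nra.
  destruct (w_char tau Ht) as [[_ H]|[_ [S [HS H]]]].
  - rewrite H. pose proof (Rabs_pos (Bq tau)). nra.
  - set (A := Aq tau) in *. set (B := Bq tau) in *. set (r := rr tau) in *. set (b := Rabs B) in *.
    assert (Hb2 : b * b = B * B) by (unfold b; rewrite <- Rabs_mult; rewrite Rabs_right; [ring | nra]).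
    assert (Hb0 : 0 <= b) by apply Rabs_pos.
    assert (Key : 0 <= A * (A - S * r) + b * r).
    { destruct (Rle_lt_dec A 0).
      - assert (0 <= - A * S * r) by (repeat apply Rmult_le_pos; nra). nra.
      - assert (Hab : r <= A + b).
        { destruct (Rle_lt_dec r (A + b)) as [|Hl]; auto. exfalso.
          assert ((A + b) * (A + b) < r * r) by (apply Rmult_le_0_lt_compat; lra).
          nra. }
        assert (A * S * r <= A * r) by (assert (0 <= A * r) by nra; nra).
        nra. }
    apply Rmult_le_reg_r with r; auto.
    rewrite (Rmult_assoc A (w tau) r), H. assert (0 <= k * V * (A * (A - S * r) + b * r)) by (apply Rmult_le_pos; lra).
    nra.
Qed.

Lemma P2 tau : 0 <= tau -> Bq tau <= 0 -> - Bq tau * w tau <= k * V * Rmax (Aq tau) 0.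
Proof.
  intros Ht HBn. pose proof (rr_pos tau Ht) as Hr0.
  pose proof (A_le_rr tau) as HA. pose proof (B_le_rr tau) as HB.
  assert (HkV : 0 < k * V) by nra.
  destruct (w_char tau Ht) as [[_ H]|[_ [S [HS H]]]].
  - rewrite H. assert (0 <= Rmax (Aq tau) 0) by apply Rmax_r. nra.
  - set (A := Aq tau) in *. set (B := Bq tau) in *. set (r := rr tau) in *.
    rewrite Rabs_left1 in HB by auto.
    assert (Key : - B * (A - S * r) <= Rmax A 0 * r).
    { destruct (Rle_lt_dec A 0).
      - rewrite Rmax_right by lra. assert (0 <= S * r) by nra. nra.
      - rewrite Rmax_left by lra. assert (0 <= - B * S * r) by (repeat apply Rmult_le_pos; nra).
        apply Rabs_le_between in HA. nra. }
    apply Rmult_le_reg_r with r; auto.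
    replace (- B * w tau * r) with (- B * (w tau * r)) by ring.
    rewrite H. replace (- B * (k * V * (A - S * r))) with (k * V * (- B * (A - S * r))) by ring.
    replace (k * V * Rmax A 0 * r) with (k * V * (Rmax A 0 * r)) by ring. apply Rmult_le_compat_l; lra.
Qed.

Lemma P0 tau : 0 <= tau -> Aq tau <= 0 -> 0 <= Aq tau * w tau.
Proof.
  intros Ht HAn. pose proof (rr_pos tau Ht) as Hr0.
  assert (HkV : 0 < k * V) by nra.
  destruct (w_char tau Ht) as [[_ H]|[_ [S [HS H]]]].
  - rewrite H. lra.
  - apply Rmult_le_reg_r with (rr tau); auto. rewrite Rmult_0_l, Rmult_assoc, H.
    assert (0 <= - Aq tau * S * rr tau) by (repeat apply Rmult_le_pos; nra).
    assert (0 <= Aq tau * (Aq tau - S * rr tau)) by nra.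
    replace (Aq tau * (k * V * (Aq tau - S * rr tau))) with (k * V * (Aq tau * (Aq tau - S * rr tau))) by ring.
    apply Rmult_le_pos; lra.
Qed.

Lemma P3 tau beta : 0 <= tau -> 0 < beta -> Aq tau <= - ra -> Aq tau <= - beta -> Rabs (Bq tau) <= beta ->
  k * V * beta / 2 <= Aq tau * w tau.
Proof.
  intros Ht Hbeta H1 H2 H3. pose proof (rr_pos tau Ht) as Hr0. pose proof (rr_sq' tau) as Hsq.
  pose proof (A_le_rr tau) as HA.
  assert (HkV : 0 < k * V) by nra.
  rewrite Rabs_left in HA by lra.
  destruct (w_char tau Ht) as [[Hlt H]|[_ [S [HS H]]]].
  - lra.
  - set (A := Aq tau) in *. set (B := Bq tau) in *. set (r := rr tau) in *.
    assert (Hrle : r <= - A + beta).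
    { assert (B * B <= beta * beta) by (apply Rabs_le_between in H3; nra).
      destruct (Rle_lt_dec r (- A + beta)); auto. nra. }
    assert (Key : beta * r / 2 <= A * (A - S * r)).
    { assert (0 <= - A * S * r) by (repeat apply Rmult_le_pos; nra). nra. }
    apply Rmult_le_reg_r with r; auto.
    rewrite (Rmult_assoc A (w tau) r), H. replace (A * (k * V * (A - S * r))) with (k * V * (A * (A - S * r))) by ring.
    replace (k * V * beta / 2 * r) with (k * V * (beta * r / 2)) by field.
    apply Rmult_le_compat_l; lra.
Qed.

Lemma Rmax0_lip a b : Rabs (Rmax a 0 - Rmax b 0) <= Rabs (a - b).
Proof.
  pose proof (Rle_abs (a - b)). pose proof (Rle_abs (- (a - b))). rewrite Rabs_Ropp in *.
  unfold Rmax. destruct (Rle_dec a 0), (Rle_dec b 0); apply Rabs_le; split; lra.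
Qed.

Lemma B_rate s t m : 0 <= s -> s <= t -> (forall tau, s <= tau <= t -> m <= Aq tau * w tau) ->
  m * (t - s) <= Bq t - Bq s.
Proof.
  intros Hs Hst Hm.
  set (f := fun tau => m * (tau - s) - Bq tau).
  assert (f t <= f s).
  { apply (dini_le f s t (Rabs m + KL t)); auto.
    - intros a b Ha Hab Hb. unfold f.
      replace (m * (b - s) - Bq b - (m * (a - s) - Bq a)) with (m * (b - a) + - (Bq b - Bq a)) by ring.
      eapply Rle_trans. apply Rabs_triang. rewrite Rabs_Ropp, Rabs_mult.
      rewrite (Rabs_right (b - a)) by lra.
      pose proof (B_lip a b t ltac:(lra) Hab Hb). lra.
    - intros a Ha Hat eps Heps. destruct (KEY_B a ltac:(lra) eps Heps) as [d [Hd HK]].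
      exists d. split; auto. intros h Hh Hhd Hht. unfold f.
      assert (H := HK h m Hh Hhd ltac:(intros tau Htau; apply Hm; lra)).
      nra. }
  unfold f in H. replace (s - s) with 0 in H by ring. lra.
Qed.

Lemma inv_B t0 : 0 <= t0 -> 0 <= Bq t0 -> forall t, t0 <= t -> 0 <= Bq t.
Proof.
  intros Ht0 HB0.
  assert (G : forall t, t0 <= t -> Rmax (- Bq t) 0 = 0).
  { apply (gl (fun t => Rmax (- Bq t) 0) t0 (k * V)).
    - nra.
    - intros; apply Rmax_r.
    - apply Rmax_right. lra.
    - intros b Hb. exists (UU 0 + 2 * V * b), (KL b). intros s t Hs Hst Htb. split.
      + apply Rmax_lub. pose proof (B_le_UU t). pose proof (UU_grow t ltac:(lra)).
        apply Rabs_le_between in H. nra. pose proof (UU0_pos). nra.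
      + eapply Rle_trans. apply Rmax0_lip. replace (- Bq t - - Bq s) with (- (Bq t - Bq s)) by ring.
        rewrite Rabs_Ropp. apply B_lip; lra.
    - intros t Ht eps Heps.
      set (L := KL (t + 1)). assert (HL : 0 < L) by (apply KL_pos; lra).
      destruct (Rlt_le_dec 0 (Bq t)) as [Hpos|Hneg].
      + exists (Rmin 1 (Bq t / L)). split. apply Rmin_pos. lra. apply Rdiv_lt_0_compat; lra.
        intros h Hh Hhd.
        assert (Hh1 : h < 1) by (eapply Rlt_le_trans; [apply Hhd | apply Rmin_l]).
        assert (Hh2 : h < Bq t / L) by (eapply Rlt_le_trans; [apply Hhd | apply Rmin_r]).
        assert (L * h < Bq t).
        { apply Rmult_lt_reg_r with (/ L). apply Rinv_0_lt_compat; lra.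
          replace (L * h * / L) with h by (field; lra). exact Hh2. }
        pose proof (B_lip t (t + h) (t + 1) ltac:(lra) ltac:(lra) ltac:(lra)) as HBl. fold L in HBl.
        replace (t + h - t) with h in HBl by ring. apply Rabs_le_between in HBl.
        rewrite (Rmax_right (- Bq (t + h))) by lra. rewrite (Rmax_right (- Bq t)) by lra.
        assert (0 <= eps * h) by nra. lra.
      + destruct (KEY_B t ltac:(lra) (eps / 2) ltac:(lra)) as [d1 [Hd1 HK]].
        destruct (small_delta (k * V * L) (eps / 2) ltac:(assert (0 < k * V * L) by (repeat apply Rmult_lt_0_compat; lra); lra) ltac:(lra))
          as [d2 [Hd2 [Hd2a [Hd2b Hd2c]]]].
        exists (Rmin d1 d2). split. apply Rmin_pos; lra. intros h Hh Hhd.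
        assert (Hh1 : h < d1) by (eapply Rlt_le_trans; [apply Hhd | apply Rmin_l]).
        assert (Hh2 : h < d2) by (eapply Rlt_le_trans; [apply Hhd | apply Rmin_r]).
        specialize (Hd2c h ltac:(lra) Hh2).
        assert (HB := HK h (- (k * V) * (Rabs (Bq t) + L * h)) Hh Hh1).
        assert (HB' : (- (k * V) * (Rabs (Bq t) + L * h) - eps / 2) * h <= Bq (t + h) - Bq t).
        { apply HB. intros tau Htau. eapply Rle_trans. 2: apply P1; lra.
          pose proof (B_lip t tau (t + 1) ltac:(lra) ltac:(lra) ltac:(lra)) as HBl. fold L in HBl.
          assert (Rabs (Bq tau) <= Rabs (Bq t) + L * h).
          { replace (Bq tau) with (Bq t + (Bq tau - Bq t)) by ring.
            eapply Rle_trans. apply Rabs_triang. assert (L * (tau - t) <= L * h) by (apply Rmult_le_compat_l; lra). lra. }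
          assert (0 < k * V) by nra. nra. }
        rewrite (Rmax_left (- Bq t)) by lra. rewrite Rabs_left1 in HB' by lra.
        cut (Rmax (- Bq (t + h)) 0 <= - Bq t + (k * V * - Bq t + eps) * h). lra.
        apply Rmax_lub.
        * assert (E : (- (k * V) * (- Bq t + L * h) - eps / 2) * h = - (k * V * - Bq t) * h - (k * V * L) * h * h - eps / 2 * h) by ring.
          assert ((k * V * L) * h * h <= eps / 2 * h) by (apply Rmult_le_compat_r; lra).
          nra.
        * assert (0 <= k * V * - Bq t) by (apply Rmult_le_pos; nra). assert (0 <= (k * V * - Bq t + eps) * h) by (apply Rmult_le_pos; lra). lra. }
  intros t Ht. specialize (G t Ht). pose proof (Rmax_l (- Bq t) 0). lra.
Qed.

Lemma KR_pos b : 0 <= b -> 0 <= KR b.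
Proof. intro. unfold KR. pose proof UU0_pos. assert (0 <= V * b) by nra. nra. Qed.

Lemma step_a1 : (forall t, 0 <= t -> Bq t < 0) -> exists t1, 0 <= t1 /\ Aq t1 <= 0.
Proof.
  intros HB. apply NNPP. intro Hn.
  assert (HA : forall t, 0 <= t -> 0 < Aq t).
  { intros t Ht. destruct (Rlt_le_dec 0 (Aq t)); auto. exfalso. apply Hn. exists t. auto. }
  set (f := fun t => Aq t + V * t + k / 2 * R2 t).
  set (T := (Rabs (Aq 0) + k / 2 * R2 0 + 1) / V).
  assert (HR0 : 0 <= R2 0) by (unfold R2; pose proof (pow2_ge_0 (u1 0)); pose proof (pow2_ge_0 (u2 0)); lra).
  assert (HT : 0 <= T).
  { unfold T. apply Rmult_le_pos. pose proof (Rabs_pos (Aq 0)). assert (0 <= k / 2 * R2 0) by (apply Rmult_le_pos; lra). lra.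
    left; apply Rinv_0_lt_compat; lra. }
  assert (Hf : f T <= f 0).
  { apply (dini_le f 0 T (KL T + V + k / 2 * KR T)); auto.
    - intros a b Ha Hab Hb. unfold f.
      replace (Aq b + V * b + k / 2 * R2 b - (Aq a + V * a + k / 2 * R2 a))
        with ((Aq b - Aq a) + V * (b - a) + k / 2 * (R2 b - R2 a)) by ring.
      eapply Rle_trans. apply Rabs_triang. eapply Rle_trans. apply Rplus_le_compat_r. apply Rabs_triang.
      rewrite !Rabs_mult. rewrite (Rabs_right V), (Rabs_right (b - a)), (Rabs_right (k / 2)) by lra.
      pose proof (A_lip a b T Ha Hab Hb). pose proof (R2_lip a b T Ha Hab Hb).
      assert (k / 2 * Rabs (R2 b - R2 a) <= k / 2 * (KR T * (b - a))) by (apply Rmult_le_compat_l; lra).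
      lra.
    - intros t Ht HtT eps Heps.
      set (L := KL (t + 1)). assert (HL : 0 < L) by (apply KL_pos; lra).
      destruct (KEY_A t Ht (eps / 3) ltac:(lra)) as [d1 [Hd1 HKA]].
      destruct (KEY_R t Ht (2 * eps / (3 * k)) ltac:(apply Rdiv_lt_0_compat; lra)) as [d2 [Hd2 HKR]].
      destruct (small_delta (k * V * L) (eps / 3) ltac:(assert (0 < k * V * L) by (repeat apply Rmult_lt_0_compat; lra); lra) ltac:(lra))
          as [d3 [Hd3 [Hd3a [_ Hd3c]]]].
      exists (Rmin d1 (Rmin d2 d3)). split. repeat apply Rmin_pos; lra.
      intros h Hh Hhd _.
      assert (Hh1 : h < d1) by (eapply Rlt_le_trans; [apply Hhd | apply Rmin_l]).
      assert (Hh2 : h < d2) by (eapply Rlt_le_trans; [apply Hhd | eapply Rle_trans; [apply Rmin_r | apply Rmin_l]]).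
      assert (Hh3 : h < d3) by (eapply Rlt_le_trans; [apply Hhd | eapply Rle_trans; [apply Rmin_r | apply Rmin_r]]).
      specialize (Hd3c h ltac:(lra) Hh3).
      assert (HAinc := HKA h (k * V * (Aq t + L * h)) Hh Hh1).
      assert (HAinc' : Aq (t + h) - Aq t <= (- V + k * V * (Aq t + L * h) + eps / 3) * h).
      { apply HAinc. intros tau Htau. eapply Rle_trans. apply P2. lra. left; apply HB; lra.
        rewrite Rmax_left by (left; apply HA; lra).
        pose proof (A_lip t tau (t + 1) ltac:(lra) ltac:(lra) ltac:(lra)) as HAl. fold L in HAl.
        apply Rabs_le_between in HAl.
        assert (L * (tau - t) <= L * h) by (apply Rmult_le_compat_l; lra).
        apply Rmult_le_compat_l. nra. lra. }
      specialize (HKR h Hh Hh2). apply Rabs_le_between in HKR.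
      unfold f. replace (t + h) with (t + h) by ring.
      assert (Ek : k / 2 * (2 * eps / (3 * k) * h) = eps / 3 * h) by (field; lra).
      assert (HR : k / 2 * (R2 (t + h) - R2 t) <= k / 2 * (- 2 * V * h * Aq t + 2 * eps / (3 * k) * h)).
      { apply Rmult_le_compat_l; lra. }
      assert (E1 : (- V + k * V * (Aq t + L * h) + eps / 3) * h = - V * h + k * V * Aq t * h + (k * V * L * h) * h + eps / 3 * h) by ring.
      assert (E2 : k / 2 * (- 2 * V * h * Aq t + 2 * eps / (3 * k) * h) = - (k * V * Aq t * h) + k / 2 * (2 * eps / (3 * k) * h)) by (field; lra).
      assert ((k * V * L * h) * h <= eps / 3 * h) by (apply Rmult_le_compat_r; lra).
      lra. }
  unfold f in Hf. 
  assert (HRT : 0 <= R2 T) by (unfold R2; pose proof (pow2_ge_0 (u1 T)); pose proof (pow2_ge_0 (u2 T)); lra).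
  assert (HVT : V * T = Rabs (Aq 0) + k / 2 * R2 0 + 1) by (unfold T; field; lra).
  assert (0 <= k / 2 * R2 T) by (apply Rmult_le_pos; lra).
  pose proof (Rle_abs (Aq 0)). pose proof (HA T HT). lra.
Qed.

Lemma step_a2 t1 : 0 <= t1 -> Aq t1 <= 0 -> (forall t, 0 <= t -> Bq t < 0) ->
  forall t, t1 <= t -> Aq t <= - V * (t - t1).
Proof.
  intros Ht1 HA1 HB.
  assert (G : forall t, t1 <= t -> Rmax (Aq t + V * (t - t1)) 0 = 0).
  { apply (gl (fun t => Rmax (Aq t + V * (t - t1)) 0) t1 (k * V)).
    - nra.
    - intros; apply Rmax_r.
    - apply Rmax_right. lra.
    - intros b Hb. exists (UU 0 + 2 * V * b + V * b), (KL b + V). intros s t Hs Hst Htb. split.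
      + apply Rmax_lub. pose proof (A_le_UU t). pose proof (UU_grow t ltac:(lra)).
        apply Rabs_le_between in H. assert (V * (t - t1) <= V * b) by (apply Rmult_le_compat_l; lra). assert (V * t <= V * b) by (apply Rmult_le_compat_l; lra). lra.
        pose proof (UU0_pos). nra.
      + eapply Rle_trans. apply Rmax0_lip.
        replace (Aq t + V * (t - t1) - (Aq s + V * (s - t1))) with ((Aq t - Aq s) + V * (t - s)) by ring.
        eapply Rle_trans. apply Rabs_triang. rewrite Rabs_mult, (Rabs_right V), (Rabs_right (t - s)) by lra.
        pose proof (A_lip s t b ltac:(lra) Hst Htb). lra.
    - intros t Ht eps Heps.
      set (L := KL (t + 1)). assert (HL : 0 < L) by (apply KL_pos; lra).
      set (ft := Aq t + V * (t - t1)).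
      destruct (Rlt_le_dec ft 0) as [Hneg|Hpos].
      + exists (Rmin 1 (- ft / (L + V))). split. apply Rmin_pos. lra. apply Rdiv_lt_0_compat; lra.
        intros h Hh Hhd.
        assert (Hh1 : h < 1) by (eapply Rlt_le_trans; [apply Hhd | apply Rmin_l]).
        assert (Hh2 : h < - ft / (L + V)) by (eapply Rlt_le_trans; [apply Hhd | apply Rmin_r]).
        assert ((L + V) * h < - ft).
        { apply Rmult_lt_reg_r with (/ (L + V)). apply Rinv_0_lt_compat; lra.
          replace ((L + V) * h * / (L + V)) with h by (field; lra). exact Hh2. }
        pose proof (A_lip t (t + h) (t + 1) ltac:(lra) ltac:(lra) ltac:(lra)) as HAl. fold L in HAl.
        replace (t + h - t) with h in HAl by ring. apply Rabs_le_between in HAl.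
        fold ft. rewrite (Rmax_right ft) by lra.
        rewrite (Rmax_right (Aq (t + h) + V * (t + h - t1))).
        assert (0 <= eps * h) by nra. lra.
        unfold ft in *. nra.
      + destruct (KEY_A t ltac:(lra) (eps / 2) ltac:(lra)) as [d1 [Hd1 HK]].
        destruct (small_delta (k * V * L) (eps / 2) ltac:(assert (0 < k * V * L) by (repeat apply Rmult_lt_0_compat; lra); lra) ltac:(lra))
          as [d2 [Hd2 [Hd2a [_ Hd2c]]]].
        exists (Rmin d1 d2). split. apply Rmin_pos; lra. intros h Hh Hhd.
        assert (Hh1 : h < d1) by (eapply Rlt_le_trans; [apply Hhd | apply Rmin_l]).
        assert (Hh2 : h < d2) by (eapply Rlt_le_trans; [apply Hhd | apply Rmin_r]).
        specialize (Hd2c h ltac:(lra) Hh2).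
        assert (Hmx : Rmax (Aq t) 0 <= ft).
        { apply Rmax_lub; auto. unfold ft. assert (0 <= V * (t - t1)) by (apply Rmult_le_pos; lra). lra. }
        assert (HAinc : Aq (t + h) - Aq t <= (- V + k * V * (Rmax (Aq t) 0 + L * h) + eps / 2) * h).
        { apply HK; auto. intros tau Htau. eapply Rle_trans. apply P2. lra. left; apply HB; lra.
          pose proof (A_lip t tau (t + 1) ltac:(lra) ltac:(lra) ltac:(lra)) as HAl. fold L in HAl.
          apply Rabs_le_between in HAl.
          assert (L * (tau - t) <= L * h) by (apply Rmult_le_compat_l; lra).
          apply Rmult_le_compat_l. nra. apply Rmax_lub.
          pose proof (Rmax_l (Aq t) 0). lra. pose proof (Rmax_r (Aq t) 0). assert (0 <= L * h) by nra. lra. }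
        fold ft. rewrite (Rmax_left ft) by lra.
        cut (Rmax (Aq (t + h) + V * (t + h - t1)) 0 <= ft + (k * V * ft + eps) * h). lra.
        assert (0 <= k * V * ft) by (apply Rmult_le_pos; nra).
        apply Rmax_lub.
        * assert (E1 : (- V + k * V * (Rmax (Aq t) 0 + L * h) + eps / 2) * h
               = - V * h + (k * V * Rmax (Aq t) 0) * h + (k * V * L * h) * h + eps / 2 * h) by ring.
          assert ((k * V * L * h) * h <= eps / 2 * h) by (apply Rmult_le_compat_r; lra).
          assert ((k * V * Rmax (Aq t) 0) * h <= (k * V * ft) * h).
          { apply Rmult_le_compat_r. lra. apply Rmult_le_compat_l. nra. auto. }
          unfold ft in *. lra.
        * assert (0 <= (k * V * ft + eps) * h) by (apply Rmult_le_pos; lra). lra. }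
  intros t Ht. specialize (G t Ht). pose proof (Rmax_l (Aq t + V * (t - t1)) 0). lra.
Qed.

Lemma reach : exists t, 0 <= t /\ 0 <= Bq t.
Proof.
  apply NNPP. intro Hn.
  assert (HB : forall t, 0 <= t -> Bq t < 0).
  { intros t Ht. destruct (Rlt_le_dec (Bq t) 0); auto. exfalso. apply Hn. exists t; auto. }
  destruct (step_a1 HB) as [t1 [Ht1 HA1]].
  pose proof (step_a2 t1 Ht1 HA1 HB) as HA.
  set (beta := - Bq t1).
  assert (Hbeta : 0 < beta) by (unfold beta; pose proof (HB t1 Ht1); lra).
  assert (HBl : forall t, t1 <= t -> - beta <= Bq t).
  { intros t Ht. pose proof (B_rate t1 t 0 Ht1 Ht). unfold beta.
    assert (0 * (t - t1) <= Bq t - Bq t1).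
    { apply H. intros tau Htau. apply P0. lra. pose proof (HA tau ltac:(lra)).
      assert (0 <= V * (tau - t1)) by (apply Rmult_le_pos; lra). lra. }
    lra. }
  set (t3 := t1 + (beta + ra) / V).
  assert (Ht3 : t1 <= t3) by (unfold t3; assert (0 <= (beta + ra) / V) by (apply Rmult_le_pos; [lra | left; apply Rinv_0_lt_compat; lra]); lra).
  set (t4 := t3 + 4 / (k * V)).
  assert (Ht4 : t3 <= t4) by (unfold t4; assert (0 <= 4 / (k * V)) by (apply Rmult_le_pos; [lra | left; apply Rinv_0_lt_compat; nra]); lra).
  assert (Hr34 := B_rate t3 t4 (k * V * beta / 2) ltac:(lra) Ht4).
  assert (H34 : k * V * beta / 2 * (t4 - t3) <= Bq t4 - Bq t3).
  { apply Hr34. intros tau Htau. apply P3; try lra.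
    - pose proof (HA tau ltac:(lra)).
      assert (V * (tau - t1) >= beta + ra).
      { assert (V * (t3 - t1) = beta + ra) by (unfold t3; field; lra).
        assert (V * (t3 - t1) <= V * (tau - t1)) by (apply Rmult_le_compat_l; lra). lra. }
      lra.
    - pose proof (HA tau ltac:(lra)).
      assert (V * (t3 - t1) = beta + ra) by (unfold t3; field; lra).
      assert (V * (t3 - t1) <= V * (tau - t1)) by (apply Rmult_le_compat_l; lra). lra.
    - apply Rabs_le. pose proof (HBl tau ltac:(lra)). pose proof (HB tau ltac:(lra)). lra. }
  assert (E : k * V * beta / 2 * (t4 - t3) = 2 * beta) by (unfold t4; field; nra).
  pose proof (HBl t3 Ht3). pose proof (HB t4 ltac:(lra)). lra.
Qed.

End Main.

Theorem lemma4 (xT yT V k ra : R) (x y psi : R -> R) :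
  0 < V -> 0 < k -> 0 <= ra ->
  closed_loop V k ra xT yT x y psi ->
  (forall t, 0 <= t -> 0 < dist_T xT yT (x t) (y t)) ->
  exists tstar, 0 <= tstar /\
    forall t theta, tstar <= t ->
      is_bearing xT yT (x t) (y t) (psi t) theta ->
      0 <= theta <= PI.
Proof.
  intros HV Hk Hra HCL Hr.
  destruct (reach xT yT V k ra x y psi HV Hk Hra HCL Hr) as [ts [Hts HBts]].
  exists ts. split; auto.
  intros t theta Htt [[Hth1 Hth2] [_ Hsin]].
  pose proof (inv_B xT yT V k ra x y psi HV Hk Hra HCL Hr ts Hts HBts t Htt) as HB.
  unfold Bq, u1, u2 in HB. rewrite <- Hsin in HB.
  assert (Hd : 0 < dist_T xT yT (x t) (y t)) by (apply Hr; lra).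
  split; auto.
  destruct (Rle_lt_dec theta PI) as [|Hgt]; auto. exfalso.
  assert (sin theta < 0) by (apply sin_lt_0; lra).
  nra.
Qed.
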